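(* Let $(\mathcal A,\mathcal B)$ be a $(\theta,\theta)$ pair. Then $(\mathcal A,\mathcal B)$ is nice if and only if for every two families $X=\{x_u:u<\theta\}$ and $Y=\{y_v:v<\theta\}$, each consisting of pairwise disjoint finite subsets of $\theta$, every $X$-sequence $S$ and every $Y$-sequence $T$, the product partial order $\mathcal Q(X,S)\times\mathcal Q(Y,T)$ has the $\kappa$-chain condition (every antichain has size $<\kappa$).
   Context: Standing assumptions: $\theta$ is a singular cardinal of uncountable cofinality, $\kappa=\mathrm{cf}(\theta)$, and $\langle\theta_\alpha:\alpha<\kappa\rangle$ is a fixed increasing sequence of cardinals converging to $\theta$ with $\theta_0>\kappa$. A $(\theta,\theta)$ pair is $(\mathcal A,\mathcal B)$ with $\mathcal A=\{a_\xi:\xi<\theta\}$, $\mathcal B=\{b_\xi:\xi<\theta\}$ subsets of $\omega$ such that $a_\xi\cap b_\eta$ is finite for all $\xi,\eta<\theta$. For finite $x\subseteq\theta$, $a(x)=\bigcap_{\xi\in x}a_\xi$, $b(x)=\bigcap_{\xi\in x}b_\xi$, with $a(\emptyset)=b(\emptyset)=\omega$. The pair is nice if for every family $\{x_i:i<\theta\}$ of pairwise disjoint finite subsets of $\theta$ there are $i,j<\theta$ with $a(x_i)\cap b(x_j)\ne\emptyset$. Given a family $X=\{x_i:i<\theta\}$ of pairwise disjoint finite subsets of $\theta$, an $X$-sequence is $S=\{S_\alpha:\alpha<\kappa\}$ where the $S_\alpha$ are pairwise disjoint subsets of $\theta$, $|S_\alpha|>\theta_\alpha$, and $a(x_i)\cap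 b(x_j)=\emptyset$ for all $i,j\in S_\alpha$, for every $\alpha<\kappa$. $\mathcal Q(X,S)$ is the set of finite $F\subseteq\kappa$ such that for all distinct $\alpha,\beta\in F$ there exist $i\in S_\alpha$, $j\in S_\beta$ with $a(x_i)\cap b(x_j)\neq\emptyset$ or $b(x_i)\cap a(x_j)\ne\emptyset$; it is ordered by inclusion (two conditions are compatible iff their union is in the poset). *)

(* Defs.v *)
From mathcomp Require Import all_boot.
From mathcomp Require Import boolp classical_sets functions cardinality.
From Stdlib Require Import Wellfounded.

Set Implicit Arguments.
Unset Strict Implicit.
Unset Printing Implicit Defensive.

Local Open Scope classical_set_scope.
Local Open Scope card_scope.

Definition card_lt T U (A : set T) (B : set U) : Prop :=
  (A #<= B) /\ ~ (B #<= A).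

(* Ordinals / cardinals, represented by well-ordered types.           *)

Definition well_order T (lt : T -> T -> Prop) : Prop :=
  [/\ (forall x, ~ lt x x),
      (forall x y z, lt x y -> lt y z -> lt x z),
      (forall x y, lt x y \/ x = y \/ lt y x)
    & well_founded lt].

Definition seg T (lt : T -> T -> Prop) (t : T) : set T := [set s | lt s t].

Definition is_cardinal T (lt : T -> T -> Prop) : Prop :=
  forall t, card_lt (seg lt t) [set: T].

(* the ordinal below t (i.e. the ordinal t itself) is a cardinal *)
Definition is_cardinal_below T (lt : T -> T -> Prop) (t : T) : Prop :=
  forall s, lt s t -> card_lt (seg lt s) (seg lt t).

Definition cofinal T (lt : T -> T -> Prop) (A : set T) : Prop :=
  forall t, exists2 s, A s & (lt t s \/ t = s).

Definition cofinality_is T (ltT : T -> T -> Prop) K : Prop :=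
  (exists A : set T, cofinal ltT A /\ A #= [set: K]) /\
  (forall A : set T, cofinal ltT A -> [set: K] #<= A).

(* Standing assumptions: theta (= T, ltT) is a singular cardinal of uncountable
   cofinality kappa (= K, ltK), and th : K -> T is an increasing sequence of
   cardinals converging to theta with theta_0 > kappa.  The cardinal theta_alpha
   is the initial segment [seg ltT (th alpha)]. *)
Definition standing_assumptions T (ltT : T -> T -> Prop)
    K (ltK : K -> K -> Prop) (th : K -> T) : Prop :=
  well_order ltT /\ is_cardinal ltT /\
  well_order ltK /\ is_cardinal ltK /\
  cofinality_is ltT K /\
  card_lt [set: K] [set: T] /\
  ~ countable [set: K] /\
  (forall a, is_cardinal_below ltT (th a)) /\
  (forall a b, ltK a b -> ltT (th a) (th b)) /\
  (forall t, exists a, ltT t (th a)) /\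
  (forall k0, (forall k, ~ ltK k k0) ->
      card_lt [set: K] (seg ltT (th k0))).

Definition theta_pair T (a b : T -> set nat) : Prop :=
  forall xi eta, finite_set (a xi `&` b eta).

(* a(x) = intersection of the a_xi, xi in x; a(emptyset) = omega *)
Definition capf T (a : T -> set nat) (x : set T) : set nat :=
  \bigcap_(xi in x) a xi.

Definition disj_fin_family T (x : T -> set T) : Prop :=
  (forall i, finite_set (x i)) /\
  (forall i j, i <> j -> x i `&` x j = set0).

Definition nice T (a b : T -> set nat) : Prop :=
  forall x : T -> set T, disj_fin_family x ->
    exists i j, capf a (x i) `&` capf b (x j) !=set0.

Definition X_sequence T (ltT : T -> T -> Prop) K (th : K -> T)
    (a b : T -> set nat) (x : T -> set T) (S : K -> set T) : Prop :=
  [/\ (forall al be, al <> be -> S al `&` S be = set0),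
      (forall al, card_lt (seg ltT (th al)) (S al))
    & (forall al i j, S al i -> S al j ->
          capf a (x i) `&` capf b (x j) = set0)].

(* the poset Q(X,S): finite F subset of kappa, ordered by inclusion *)
Definition Qposet T K (a b : T -> set nat) (x : T -> set T) (S : K -> set T)
    (F : set K) : Prop :=
  finite_set F /\
  forall al be, F al -> F be -> al <> be ->
    exists i j, [/\ S al i, S be j &
      (capf a (x i) `&` capf b (x j) !=set0 \/
       capf b (x i) `&` capf a (x j) !=set0)].

Definition prod_poset K (P1 P2 : set K -> Prop) (p : set K * set K) : Prop :=
  P1 p.1 /\ P2 p.2.

Definition prod_le K (p q : set K * set K) : Prop :=
  p.1 `<=` q.1 /\ p.2 `<=` q.2.

Definition prod_compatible K (P1 P2 : set K -> Prop) (p q : set K * set K) :=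
  exists r, prod_poset P1 P2 r /\ prod_le p r /\ prod_le q r.

Definition prod_antichain K (P1 P2 : set K -> Prop) (A : set (set K * set K)) :=
  (forall p, A p -> prod_poset P1 P2 p) /\
  (forall p q, A p -> A q -> p <> q -> ~ prod_compatible P1 P2 p q).

Definition prod_kappa_cc K (P1 P2 : set K -> Prop) : Prop :=
  forall A, prod_antichain P1 P2 A -> card_lt A [set: K].

(* Main.v *)
Require Import Defs.
From mathcomp Require Import all_boot.
From mathcomp Require Import boolp classical_sets functions cardinality.
From mathcomp Require wochoice.
From Stdlib Require Import Wellfounded.
Set Implicit Arguments. Unset Strict Implicit. Unset Printing Implicit Defensive.
Local Open Scope classical_set_scope.
Local Open Scope card_scope.

Definition injle U V (A : set U) (B : set V) := exists f : U -> V,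
  (forall x, A x -> B (f x)) /\ (forall x y, A x -> A y -> f x = f y -> x = y).
Definition ch U (u0 : U) (P : U -> Prop) : U :=
  match pselect (exists x, P x) with left h => projT1 (cid h) | right _ => u0 end.
Lemma chP U (u0 : U) (P : U -> Prop) : (exists x, P x) -> P (ch u0 P).
Proof. by move=> h; rewrite /ch; case: pselect => // h'; exact: projT2 (cid h'). Qed.
Lemma zorn_rel W (P : set W -> Prop) (r0 : set W) : P r0 ->
 (forall C : set (set W), (exists r, C r) -> (forall r, C r -> P r /\ r0 `<=` r) ->
    (forall r s, C r -> C s -> r `<=` s \/ s `<=` r) -> P (\bigcup_(r in C) r)) ->
 exists m, P m /\ r0 `<=` m /\ forall s, P s -> m `<=` s -> s = m.
Proof.
move=> P0 Hch.
pose R := fun r s : set W => `[< r `<=` s >].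
pose S : {pred set W} := fun r => `[< P r /\ r0 `<=` r >].
have := @wochoice.Zorn's_lemma (set W) R S.
case.
- by move=> r _; apply/asboolP.
- by move=> r s t _ _ _ /asboolP h1 /asboolP h2; apply/asboolP => x /h1 /h2.
- move=> C sCS Cwo.
  have Cch := wochoice.wo_chainW Cwo.
  have [[r Cr]|nC] := pselect (exists r, r \in C).
    exists (\bigcup_(r in [set r | r \in C]) r).
      apply/asboolP; split; last first.
        by move=> x r0x; exists r => //; have /sCS/asboolP[_ ] := Cr; apply.
      apply: Hch; first by exists r.
        by move=> s /= Cs; have /sCS/asboolP := Cs.
      move=> s t /= Cs Ct; have := Cch s t Cs Ct.
      by case/orP => /asboolP; [left|right].
    by move=> s Cs; apply/asboolP => x sx; exists s.
  exists r0; first by apply/asboolP; split.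
  by move=> s Cs; exfalso; apply: nC; exists s.
- move=> m /asboolP [Pm r0m] mmax; exists m; split => //; split => //.
  move=> s Ps ms; have : R m s by apply/asboolP.
  move/mmax => /(_ (asboolT (conj Ps (subset_trans r0m ms)))) /asboolP sm.
  by apply/seteqP; split.
Qed.

Lemma injle_total U V (u0 : U) (v0 : V) (X : set U) (Y : set V) :
  injle X Y \/ injle Y X.
Proof.
pose P (r : set (U * V)) := [/\ forall p, r p -> X p.1 /\ Y p.2,
   forall x y y', r (x, y) -> r (x, y') -> y = y' &
   forall x x' y, r (x, y) -> r (x', y) -> x = x'].
have P0 : P set0 by split => // [p|x y y'|x x' y].
have Hch : forall C : set (set (U * V)), (exists r, C r) -> (forall r, C r -> P r /\ set0 `<=` r) ->
    (forall r s, C r -> C s -> r `<=` s \/ s `<=` r) -> P (\bigcup_(r in C) r).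
  move=> C _ CP Cch; split.
  + by move=> p [r /CP [[h _ _] _] rp]; apply: h.
  + move=> x y y' [r Cr rxy] [s Cs sxy].
    have [rs|sr] := Cch r s Cr Cs.
      by have [[_ h _] _] := CP s Cs; apply: h (rs _ rxy) sxy.
    by have [[_ h _] _] := CP r Cr; apply: h rxy (sr _ sxy).
  + move=> x x' y [r Cr rxy] [s Cs sxy].
    have [rs|sr] := Cch r s Cr Cs.
      by have [[_ _ h] _] := CP s Cs; apply: h (rs _ rxy) sxy.
    by have [[_ _ h] _] := CP r Cr; apply: h rxy (sr _ sxy).
have [m [[mXY mf mi] [_ mmax]]] := zorn_rel P0 Hch.
have [dom|] := pselect (forall x, X x -> exists y, m (x, y)).
  left; exists (fun x => ch v0 (fun y => m (x, y))); split.
    by move=> x Xx; have := mXY _ (chP v0 (dom x Xx)); case.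
  move=> x x' Xx Xx' e; apply: (mi x x' (ch v0 (fun y => m (x', y)))).
    by rewrite -e; exact: chP (dom x Xx).
  exact: chP (dom x' Xx').
move=> /existsNP [x0 /not_implyP [Xx0 nx0]].
have [ran|] := pselect (forall y, Y y -> exists x, m (x, y)).
  right; exists (fun y => ch u0 (fun x => m (x, y))); split.
    by move=> y Yy; have := mXY _ (chP u0 (ran y Yy)); case.
  move=> y y' Yy Yy' e; apply: (mf (ch u0 (fun x => m (x, y)))).
    exact: chP (ran y Yy).
  by rewrite e; exact: chP (ran y' Yy').
move=> /existsNP [y0 /not_implyP [Yy0 ny0]].
exfalso.
pose m' := m `|` [set (x0, y0)].
have Pm' : P m'.
  split.
  - by move=> p [/mXY //|->].
  - move=> x y y' [h1|[= e1 e2]] [h2|[= e3 e4]]; subst => //.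
    + exact: mf h1 h2.
    + by exfalso; apply: nx0; exists y.
    + by exfalso; apply: nx0; exists y'.
  - move=> x x' y [h1|[= e1 e2]] [h2|[= e3 e4]]; subst => //.
    + exact: mi h1 h2.
    + by exfalso; apply: ny0; exists x.
    + by exfalso; apply: ny0; exists x'.
have := mmax m' Pm' (@subsetUl _ m _).
move=> e; apply: nx0; exists y0.
by rewrite -e; right.
Qed.

Lemma card_injle U V (A : set U) (B : set V) (v0 : V) : A #<= B -> injle A B.
Proof.
move/card_leP=> [g].
pose f x := if pselect (A x) is left h then val (g (exist _ x (mem_set h))) else v0.
exists f; split.
  move=> x Ax; rewrite /f; case: pselect => // h.
  by apply: set_mem; exact: (valP (g _)).
move=> x y Ax Ay; rewrite /f; case: pselect => // hx; case: pselect => // hy.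
move/val_inj => /(@inj _ _ _ g) => H.
have := H (mem_set I) (mem_set I).
by case.
Qed.

Lemma injle_card U V (A : set U) (B : set V) : injle A B -> A #<= B.
Proof.
move=> [f [fAB finj]].
have : $|{injfun A >-> B}|.
  apply/injfunPex; exists f.
    by move=> x /= Ax; apply: fAB.
  move=> x y /set_mem Ax /set_mem Ay; exact: finj.
by case=> g; exact: inj_card_le g.
Qed.

Lemma nat_pair : exists pr : nat * nat -> nat, forall p q, pr p = pr q -> p = q.
Proof.
have := card_nat2; rewrite card_eq_le => /andP [h _].
have [f [_ fi]] := card_injle 0%N h.
by exists f => p q; apply: fi.
Qed.

Lemma hess U (u0 : U) (A : set U) : injle [set: nat] A -> injle (A `*` A) A.
Proof.
move=> [io [ioA ioi]].
have ioinj : forall m n, io m = io n -> m = n by move=> m n; apply: ioi.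
have [pr pri] := nat_pair.
pose Bs (r : set ((U * U) * U)) := [set u | exists w, r ((u, u), w)].
pose P (r : set ((U * U) * U)) := [/\ (forall p w, r (p, w) -> [/\ Bs r p.1, Bs r p.2 & Bs r w]),
   (forall u v, Bs r u -> Bs r v -> exists w, r ((u, v), w)),
   (forall u, Bs r u -> A u),
   (forall p w w', r (p, w) -> r (p, w') -> w = w') &
   (forall p p' w, r (p, w) -> r (p', w) -> p = p')].
pose r0 : set ((U * U) * U) := fun q => exists m n, q = ((io m, io n), io (pr (m, n))).
have Bs0 : forall u, Bs r0 u <-> exists m, u = io m.
  move=> u; split.
    by move=> [w [m [n [= -> _ _]]]]; exists m.
  by move=> [m ->]; exists (io (pr (m, m))); exists m, m.
have P0 : P r0.
  split.
  - move=> p w [m [n [= -> ->]]] /=; split; apply/Bs0; eexists; reflexivity.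
  - move=> u v /Bs0 [m ->] /Bs0 [n ->]; exists (io (pr (m, n))); exists m, n.
    by [].
  - by move=> u /Bs0 [m ->]; apply: ioA.
  - move=> p w w' [m [n E1]] [m' [n' E2]].
    case: E1 => e0 ->; rewrite e0 in E2; by case: E2 => /ioinj -> /ioinj -> ->.
  - move=> p p' w [m [n E1]] [m' [n' E2]].
    case: E1 => -> e0; rewrite e0 in E2.
    by case: E2 => -> /ioinj /pri [-> ->].
have Bsmono : forall r s, r `<=` s -> Bs r `<=` Bs s.
  by move=> r s rs u [w h]; exists w; apply: rs.
have Hch : forall C : set (set ((U * U) * U)), (exists r, C r) ->
    (forall r, C r -> P r /\ r0 `<=` r) ->
    (forall r s, C r -> C s -> r `<=` s \/ s `<=` r) -> P (\bigcup_(r in C) r).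
  move=> C _ CP Cch.
  have BsU : forall u, Bs (\bigcup_(r in C) r) u -> exists2 r, C r & Bs r u.
    by move=> u [w [r Cr h]]; exists r => //; exists w.
  have BsU' : forall r u, C r -> Bs r u -> Bs (\bigcup_(r in C) r) u.
    by move=> r u Cr [w h]; exists w; exists r.
  split.
  - move=> p w [r Cr rp]; have [[h _ _ _ _] _] := CP r Cr.
    by have [h1 h2 h3] := h _ _ rp; split; apply: BsU' h1 + apply: BsU' h2 + apply: BsU' h3.
  - move=> u v /BsU [r Cr ru] /BsU [s Cs sv].
    have [rs|sr] := Cch r s Cr Cs.
      have [[_ h _ _ _] _] := CP s Cs.
      by have [w sw] := h u v (Bsmono _ _ rs _ ru) sv; exists w; exists s.
    have [[_ h _ _ _] _] := CP r Cr.
    by have [w sw] := h u v ru (Bsmono _ _ sr _ sv); exists w; exists r.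
  - by move=> u /BsU [r Cr ru]; have [[_ _ h _ _] _] := CP r Cr; apply: h.
  - move=> p w w' [r Cr rxy] [s Cs sxy].
    have [rs|sr] := Cch r s Cr Cs.
      by have [[_ _ _ h _] _] := CP s Cs; apply: h (rs _ rxy) sxy.
    by have [[_ _ _ h _] _] := CP r Cr; apply: h rxy (sr _ sxy).
  - move=> p p' w [r Cr rxy] [s Cs sxy].
    have [rs|sr] := Cch r s Cr Cs.
      by have [[_ _ _ _ h] _] := CP s Cs; apply: h (rs _ rxy) sxy.
    by have [[_ _ _ _ h] _] := CP r Cr; apply: h rxy (sr _ sxy).
have [m [[mran mtot mA mfun minj] [r0m mmax]]] := zorn_rel P0 Hch.
set B := Bs m.
pose mf p := ch u0 (fun w => m (p, w)).
have mfP : forall u v, B u -> B v -> m ((u, v), mf (u, v)).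
  by move=> u v Bu Bv; exact: (@chP _ u0 (fun w => m ((u, v), w)) (mtot u v Bu Bv)).
have mfB : forall u v, B u -> B v -> B (mf (u, v)).
  by move=> u v Bu Bv; have [_ _] := mran _ _ (mfP u v Bu Bv).
have mfi : forall u v u' v', B u -> B v -> B u' -> B v' ->
    mf (u, v) = mf (u', v') -> u = u' /\ v = v'.
  move=> u v u' v' Bu Bv Bu' Bv' e.
  have h2 := mfP u' v' Bu' Bv'; rewrite -e in h2.
  by have [-> ->] := minj _ _ _ (mfP u v Bu Bv) h2.
have Bio : forall n, B (io n).
  by move=> n; apply: Bsmono r0m _ _; apply/Bs0; exists n.
pose b0 := io 0%N. pose b1 := io 1%N.
have b01 : b0 <> b1 by move/ioinj.
pose c (t : bool) := if t then b0 else b1.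
have cB : forall t, B (c t) by case; apply: Bio.
have ci : forall t t', c t = c t' -> t = t'.
  by case; case => //= /esym.
have BA : forall u, B u -> A u by apply: mA.
have step1 : ~ injle B (A `\` B).
  move=> [h [hB hi]].
  pose C := h @` B.
  have CnB : forall u, C u -> ~ B u by move=> u [b Bb <-]; case: (hB b Bb).
  have CA : forall u, C u -> A u by move=> u [b Bb <-]; case: (hB b Bb).
  pose k u := ch u0 (fun b => B b /\ h b = u).
  have kP : forall u, C u -> B (k u) /\ h (k u) = u.
    by move=> u [b Bb hb]; apply: (@chP _ u0 (fun b => B b /\ h b = u)); exists b.
  pose D := B `|` C.
  pose g u := if pselect (B u) is left _ then u else k u.
  have gB : forall u, D u -> B (g u).
    by move=> u [Bu|Cu]; rewrite /g; case: pselect => // _; case: (kP u Cu).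
  pose tg u := if pselect (B u) is left _ then true else false.
  pose e1 u := mf (g u, c (tg u)).
  have e1B : forall u, D u -> B (e1 u) by move=> u Du; apply: mfB; [apply: gB|apply: cB].
  have e1i : forall u u', D u -> D u' -> e1 u = e1 u' -> u = u'.
    move=> u u' Du Du' /mfi - /(_ (gB _ Du) (cB _) (gB _ Du') (cB _)) [eg /ci].
    move: eg; rewrite /g /tg.
    case: pselect => Bu; case: pselect => Bu' //= eg _.
    case: Du => [//|Cu]; case: Du' => [//|Cu'].
    by rewrite -(kP u Cu).2 -(kP u' Cu').2 eg.
  pose enc (p : U * U) := mf (e1 p.1, e1 p.2).
  have encB : forall p, D p.1 -> D p.2 -> B (enc p).
    by move=> p D1 D2; apply: mfB; apply: e1B.
  have enci : forall p p', D p.1 -> D p.2 -> D p'.1 -> D p'.2 -> enc p = enc p' -> p = p'.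
    move=> [p1 p2] [q1 q2] /= D1 D2 D1' D2' /mfi.
    move=> /(_ (e1B _ D1) (e1B _ D2) (e1B _ D1') (e1B _ D2')) [E1 E2].
    by rewrite (e1i _ _ D1 D1' E1) (e1i _ _ D2 D2' E2).
  pose psi p := h (enc p).
  pose N (p : U * U) := [/\ D p.1, D p.2 & ~ (B p.1 /\ B p.2)].
  pose m' := m `|` [set q | N q.1 /\ q.2 = psi q.1].
  have psiC : forall p, N p -> C (psi p).
    by move=> p [D1 D2 _]; exists (enc p) => //; apply: encB.
  have domm : forall p w, m (p, w) -> B p.1 /\ B p.2.
    by move=> p w mp; have [] := mran _ _ mp.
  have Bs' : forall u, Bs m' u <-> D u.
    move=> u; split.
      by move=> [w [mw|[[Du _ _] _]]]; [left; exists w | ].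
    move=> [Bu|Cu].
      by have [w mw] := Bu; exists w; left.
    exists (psi (u, u)); right; split => //; split; try by right.
    by move=> [Bu _]; apply: CnB Cu Bu.
  have Pm' : P m'.
    split.
    - move=> p w [mp|[Np /= ->]].
      + have [h1 h2 h3] := mran _ _ mp.
        by split; apply/Bs'; left.
      + have [D1 D2 _] := Np; split; apply/Bs' => //; right; exact: psiC Np.
    - move=> u v /Bs' Du /Bs' Dv.
      have [[Bu Bv]|nB] := pselect (B u /\ B v).
        by have [w mw] := mtot u v Bu Bv; exists w; left.
      by exists (psi (u, v)); right.
    - by move=> u /Bs' [/BA|/CA].
    - move=> p w w' [mp|[Np /= ->]] [mp'|[Np' /= ->]] //.
      + exact: mfun mp mp'.
      + by case: Np' => _ _ nB; exfalso; apply: nB; apply: domm mp.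
      + by case: Np => _ _ nB; exfalso; apply: nB; apply: domm mp'.
    - move=> p p' w [mp|[Np /= ->]] [mp'|[Np' /= e]].
      + exact: minj mp mp'.
      + by have [_ _ Bw] := mran _ _ mp; exfalso; apply: (CnB _ (psiC _ Np')); rewrite -e.
      + by have [_ _ Bw] := mran _ _ mp'; exfalso; apply: (CnB _ (psiC _ Np)).
      + case: Np => D1 D2 _; case: Np' => D1' D2' _.
        apply: enci => //; apply: hi; try apply: encB => //.
        by rewrite /psi in e.
  have e := mmax m' Pm' (@subsetUl _ m _).
  have Cu : C (h b0) by exists b0 => //; apply: Bio.
  have : Bs m' (h b0) by apply/Bs'; right.
  by rewrite e => /CnB; apply; exact: Cu.
have [//|[j [jB ji]]] := injle_total u0 u0 B (A `\` B).
have AB : injle A B.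
  exists (fun a => if pselect (B a) is left _ then mf (a, b0) else mf (j a, b1)); split.
    move=> a Aa; case: pselect => Ba; apply: mfB => //; try apply: Bio.
    by apply: jB.
  move=> a a' Aa Aa'.
  case: pselect => Ba; case: pselect => Ba' /mfi.
  - by move=> /(_ Ba (Bio _) Ba' (Bio _)) [].
  - by move=> /(_ Ba (Bio _) (jB _ (conj Aa' Ba')) (Bio _)) [_ /b01].
  - by move=> /(_ (jB _ (conj Aa Ba)) (Bio _) Ba' (Bio _)) [_ /esym /b01].
  - move=> /(_ (jB _ (conj Aa Ba)) (Bio _) (jB _ (conj Aa' Ba')) (Bio _)) [e _].
    exact: ji e.
case: AB => [phi [phiB phii]].
exists (fun p => mf (phi p.1, phi p.2)); split.
  by move=> [a a'] [/= Aa Aa']; apply: BA; apply: mfB; apply: phiB.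
move=> [a1 a2] [a1' a2'] [/= A1 A2] [/= A1' A2'] /mfi.
move=> /(_ (phiB _ A1) (phiB _ A2) (phiB _ A1') (phiB _ A2')) [/phii e1 /phii e2].
by rewrite (e1 A1 A1') (e2 A2 A2').
Qed.

Lemma injle_trans U V W (A : set U) (B : set V) (C : set W) :
  injle A B -> injle B C -> injle A C.
Proof.
move=> [f [fA fi]] [g [gB gi]]; exists (g \o f); split.
  by move=> x Ax; apply: gB; apply: fA.
by move=> x y Ax Ay /= /(gi _ _ (fA _ Ax) (fA _ Ay)); apply: fi.
Qed.

Lemma injle_sub U (A B : set U) : A `<=` B -> injle A B.
Proof. by move=> AB; exists id; split. Qed.

Lemma mem_In (X : eqType) (s : seq X) x : x \in s -> List.In x s.
Proof.
elim: s => //= y s IH; rewrite in_cons => /orP [/eqP ->|/IH]; by [left|right].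
Qed.

Lemma In_mem (X : eqType) (s : seq X) x : List.In x s -> x \in s.
Proof.
elim: s => //= y s IH [->|/IH h]; rewrite in_cons ?eqxx //=.
by rewrite h orbT.
Qed.

Lemma fin_list X (p : set X) : finite_set p ->
  exists s : list X, forall l, p l <-> List.In l s.
Proof.
move=> fp; have := (@finite_seqP {classic X} p).1 fp => [[s ps]].
exists s => l; rewrite ps /=; split; [exact: mem_In | ].
move=> h; exact: (@In_mem {classic X} s l h).
Qed.

Lemma fin_nat X (p : set X) : finite_set p -> injle p [set: nat].
Proof.
move=> /finite_set_countable h; exact: card_injle 0%N h.
Qed.

Lemma union_fin I X (i0 : I) (D : set I) (Z : I -> set X) :
  (forall i, D i -> finite_set (Z i)) ->
  injle (\bigcup_(i in D) Z i) (D `*` [set: nat]).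
Proof.
move=> Zf.
have hf : forall i, exists e : X -> nat, D i -> forall u v, Z i u -> Z i v -> e u = e v -> u = v.
  move=> i; case: (pselect (D i)) => Di; last by exists (fun _ => 0%N).
  have [e [_ ei]] := fin_nat (Zf i Di).
  by exists e => _ u v Zu Zv; apply: ei.
pose e i := ch (fun _ => 0%N) (fun e : X -> nat => D i -> forall u v, Z i u -> Z i v -> e u = e v -> u = v).
have eP : forall i, D i -> forall u v, Z i u -> Z i v -> e i u = e i v -> u = v.
  by move=> i; exact: (@chP _ (fun _ => 0%N) _ (hf i)).
pose s u := ch i0 (fun i => D i /\ Z i u).
exists (fun u => (s u, e (s u) u)); split.
  move=> u [i Di Zu]; have [Ds _] := @chP _ i0 (fun i => D i /\ Z i u) (ex_intro _ i (conj Di Zu)).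
  by split.
move=> u v [i Di Zu] [j Dj Zv] [].
have [Ds Zs] := @chP _ i0 (fun i => D i /\ Z i u) (ex_intro _ i (conj Di Zu)).
have [Ds' Zs'] := @chP _ i0 (fun i => D i /\ Z i v) (ex_intro _ j (conj Dj Zv)).
move=> es; rewrite -/(s u) -/(s v) in Ds Zs Ds' Zs' *.
rewrite -es in Zs' *; apply: eP => //.
Qed.

Lemma pick_avoid X I (x : I -> set X) (S : set I) (Us : set X) (D : set X) (u0 : X) (i0 : I) :
  (forall i j, i <> j -> x i `&` x j = set0) ->
  injle Us D -> ~ (S #<= D) -> exists i, S i /\ x i `&` Us = set0.
Proof.
move=> xd UD nSD; apply: contra_notP nSD => nex.
apply: injle_card; apply: injle_trans UD.
have h : forall i, S i -> exists u, (x i `&` Us) u.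
  move=> i Si; apply: contra_notP nex => nu; exists i; split => //.
  by apply/seteqP; split => // u xu; apply: nu; exists u.
exists (fun i => ch u0 (x i `&` Us)); split.
  by move=> i Si; have [] := @chP _ u0 (x i `&` Us) (h i Si).
move=> i j Si Sj e; case: (pselect (i = j)) => // ij; exfalso.
have := xd i j ij; have [xi _] := @chP _ u0 (x i `&` Us) (h i Si).
have [xj _] := @chP _ u0 (x j `&` Us) (h j Sj).
rewrite -e in xj => E; have : (x i `&` x j) (ch u0 (x i `&` Us)) by split.
by rewrite E.
Qed.

Fixpoint encl V (mf : V * V -> V) (x0 : V) (s : list V) : V :=
  match s with nil => x0 | cons v s' => mf (v, encl mf x0 s') end.

Lemma fs_enc V (v0 : V) (X : set V) : injle [set: nat] X ->
  injle [set q : set V * set V | [/\ finite_set q.1, finite_set q.2, q.1 `<=` X & q.2 `<=` X]] X.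
Proof.
move=> hX; have [mf [mfX mfi]] := hess v0 hX.
have [io [ioX ioi]] := hX.
have mfX' : forall u v, X u -> X v -> X (mf (u, v)) by move=> u v Xu Xv; apply: mfX.
have mfi' : forall u v u' v', X u -> X v -> X u' -> X v' -> mf (u, v) = mf (u', v') -> u = u' /\ v = v'.
  move=> u v u' v' Xu Xv Xu' Xv' e.
  by have [-> ->] := mfi (u, v) (u', v') (conj Xu Xv) (conj Xu' Xv') e.
pose x0 := io 0%N.
have x0X : X x0 by apply: ioX.
have enclX : forall s, (forall v, List.In v s -> X v) -> X (encl mf x0 s).
  elim => //= v s IH h; apply: mfX'; first by apply: h; left.
  by apply: IH => w ws; apply: h; right.
have encli : forall s s', size s = size s' -> (forall v, List.In v s -> X v) ->
    (forall v, List.In v s' -> X v) -> encl mf x0 s = encl mf x0 s' -> s = s'.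
  elim => [|v s IH] [|v' s'] //= [es] h h' /mfi'.
  have Xs : forall w, List.In w s -> X w by move=> w ws; apply: h; right.
  have Xs' : forall w, List.In w s' -> X w by move=> w ws; apply: h'; right.
  move=> /(_ (h v (or_introl erefl)) (enclX _ Xs) (h' v' (or_introl erefl)) (enclX _ Xs')).
  by move=> [-> /(IH _ es Xs Xs') ->].
pose enc s := mf (io (size s), encl mf x0 s).
have encX : forall s, (forall v, List.In v s -> X v) -> X (enc s).
  by move=> s h; apply: mfX'; [exact: ioX | exact: enclX].
have enci : forall s s', (forall v, List.In v s -> X v) ->
    (forall v, List.In v s' -> X v) -> enc s = enc s' -> s = s'.
  move=> s s' h h' e.
  have [e1 e2] := mfi' _ _ _ _ (ioX _ I) (enclX _ h) (ioX _ I) (enclX _ h') e.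
  by apply: encli => //; apply: ioi.
pose sF (F : set V) := ch [::] (fun s => forall l, F l <-> List.In l s).
have sFP : forall F, finite_set F -> forall l, F l <-> List.In l (sF F).
  by move=> F fF; apply: (@chP _ [::] (fun s => forall l, F l <-> List.In l s)); apply: fin_list.
have sFX : forall F, finite_set F -> F `<=` X -> forall v, List.In v (sF F) -> X v.
  by move=> F fF FX v /(sFP F fF) /FX.
have sFi : forall F G, finite_set F -> finite_set G -> sF F = sF G -> F = G.
  move=> F G fF fG e; apply/seteqP; split => l.
    by move=> /(sFP F fF); rewrite e => /(sFP G fG).
  by move=> /(sFP G fG); rewrite -e => /(sFP F fF).
exists (fun q => mf (enc (sF q.1), enc (sF q.2))); split.
  by move=> [F G] [/= fF fG FX GX]; apply: mfX'; apply: encX; apply: sFX.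
move=> [F G] [F' G'] [/= fF fG FX GX] [/= fF' fG' FX' GX'] e.
have [/enci e1 /enci e2] := mfi' _ _ _ _ (encX _ (sFX _ fF FX)) (encX _ (sFX _ fG GX)) (encX _ (sFX _ fF' FX')) (encX _ (sFX _ fG' GX')) e.
rewrite (sFi _ _ fF fF' (e1 (sFX _ fF FX) (sFX _ fF' FX'))).
by rewrite (sFi _ _ fG fG' (e2 (sFX _ fG GX) (sFX _ fG' GX'))).
Qed.

Lemma wo_tri X (lt : X -> X -> Prop) : well_order lt -> forall x y, lt x y \/ x = y \/ lt y x.
Proof. by case. Qed.
Lemma wo_irr X (lt : X -> X -> Prop) : well_order lt -> forall x, ~ lt x x.
Proof. by case. Qed.
Lemma wo_trans X (lt : X -> X -> Prop) : well_order lt -> forall x y z, lt x y -> lt y z -> lt x z.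
Proof. by case. Qed.

Lemma wo_lt_nlt X (lt : X -> X -> Prop) : well_order lt ->
  forall x b d, lt x b -> ~ lt d b -> lt x d.
Proof.
move=> wo x b d xb ndb.
case: (wo_tri wo d b) => [db|[e|bd]].
- by case: ndb.
- by rewrite e.
- exact: (wo_trans wo xb bd).
Qed.

Lemma wo_nlt_trans X (lt : X -> X -> Prop) : well_order lt ->
  forall m c' c, ~ lt m c' -> ~ lt c' c -> ~ lt m c.
Proof.
move=> wo m c' c h1 h2 mc.
case: (wo_tri wo c' c) => [c'c|[e|cc']].
- by case: h2.
- by subst.
- exact: h1 (wo_trans wo mc cc').
Qed.

Lemma wo_max X (lt : X -> X -> Prop) : well_order lt ->
  forall a b, exists d, ~ lt d a /\ ~ lt d b.
Proof.
move=> wo a b; case: (wo_tri wo a b) => [ab|[e|ba]].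
- exists b; split; last exact: (@wo_irr _ _ wo b).
  move=> ba; apply: (@wo_irr _ _ wo a); exact: (wo_trans wo ab ba).
- by exists b; rewrite e; split; exact: (@wo_irr _ _ wo b).
- exists a; split; first exact: (@wo_irr _ _ wo a).
  move=> ab; apply: (@wo_irr _ _ wo a); exact: (wo_trans wo ab ba).
Qed.

Lemma wo_min X (lt : X -> X -> Prop) : well_order lt -> forall k : X,
  exists k0, forall k, ~ lt k k0.
Proof.
move=> wo k; case: wo => _ _ _ wf.
case: (pselect (exists k0, forall k, ~ lt k k0)) => // H.
have H2 : forall k1, exists k2, lt k2 k1.
  move=> k1; case: (pselect (exists k2, lt k2 k1)) => // nk.
  by exfalso; apply: H; exists k1 => k2 h; apply: nk; exists k2.
have : forall k, Acc lt k -> False.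
  move=> k0 acc; elim: acc => k1 _ IH.
  have [k2 k21] := H2 k1.
  exact: (IH k2 k21).
by move=> /(_ k (wf k)).
Qed.
Lemma small_bnd T (ltT : T -> T -> Prop) K (ltK : K -> K -> Prop) (th : K -> T)
  (hstd : standing_assumptions ltT ltK th) (W : set K) :
  ~ ([set: K] #<= W) -> exists c, forall w, W w -> ltK w c.
Proof.
case: hstd => woT [cT [woK [cK [cof [KT [Kunc [thc [thi [thconv th0]]]]]]]]].
move=> nKW; apply: contra_notP nKW => H.
have H' : forall c, exists w, W w /\ ~ ltK w c.
  move=> c; apply: contra_notP H => nw; exists c => w Ww.
  by apply: contra_notP nw => h; exists w.
have cf : cofinal ltT (th @` W).
  move=> t; have [a ta] := thconv t; have [w [Ww nwa]] := H' a.
  exists (th w); first by exists w.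
  left; case: (wo_tri woK w a) => [wa|[e|aw]].
  - by case: nwa.
  - by rewrite e.
  - exact: (wo_trans woT ta (thi _ _ aw)).
have := cof.2 _ cf => h; apply: card_le_trans h _; exact: card_image_le.
Qed.

Definition szb X n (q : set X) := exists s : list X, (size s <= n)%N /\ forall l, q l -> List.In l s.

Lemma rem_list X (s : list X) (l : X) : List.In l s ->
  exists s', (size s' < size s)%N /\ forall x, List.In x s -> x <> l -> List.In x s'.
Proof.
elim: s => //= y s IH.
case: (pselect (y = l)) => [->|yl] h.
  by exists s; split => // x [->|//].
have [|s' [ss' hs']] := IH; first by case: h.
exists (y :: s'); split => //= x [->|xs] xl; [by left | right; exact: hs'].
Qed.

Lemma KLn T (ltT : T -> T -> Prop) K (ltK : K -> K -> Prop) (th : K -> T)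
  (hstd : standing_assumptions ltT ltK th) (k : K) (n : nat) :
  forall (I : Type) (P : set I) (st : I -> set (K * bool)),
  (forall p, P p -> szb n (st p)) ->
  (forall c, exists p, P p /\ exists l, st p l /\ ~ ltK l.1 c) ->
  exists R : set (K * bool), forall c, exists p, P p /\ exists m, ~ ltK m c /\
    (forall l, (st p l /\ ltK l.1 m) <-> R l) /\ exists l, st p l /\ ~ ltK l.1 m.
Proof.
have hstd' := hstd.
case: hstd' => woT [cT [woK [cK [cof [KT [Kunc [thc [thi [thconv th0]]]]]]]]].
elim: n => [|n IH] I P st hsz hunb.
  have [p [Pp [l [stl _]]]] := hunb k.
  have [s [s0 hs]] := hsz p Pp.
  by move: (hs l stl); case: s s0 {hs}.
case: (pselect (forall c, exists p, P p /\ (exists l, st p l) /\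
    forall l, st p l -> ~ ltK l.1 c)) => [HA|HB].
  exists set0 => c; have [p [Pp [[l stl] hp]]] := HA c.
  exists p; split => //; exists c; split; first exact: (@wo_irr _ _ woK c).
  split; last by exists l; split => //; apply: hp.
  by move=> l'; split => [[st' lt']|[]]; apply: hp st' lt'.
have [b Hb] : exists b, forall p, P p -> (exists l, st p l) -> exists l, st p l /\ ltK l.1 b.
  case: (pselect (exists b, forall p, P p -> (exists l, st p l) ->
     exists l, st p l /\ ltK l.1 b)) => // nb; exfalso; apply: HB => c.
  case: (pselect (exists p, P p /\ (exists l, st p l) /\ forall l, st p l -> ~ ltK l.1 c)) => // np.
  exfalso; apply: nb; exists c => p Pp ne.
  case: (pselect (exists l, st p l /\ ltK l.1 c)) => // nl.
  by exfalso; apply: np; exists p; split => //; split => // l stl lc; apply: nl; exists l.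
pose Pl l := [set p | P p /\ st p l].
pose stl l p := st p `\ l.
have [l [lb unb']] : exists l, ltK l.1 b /\ forall c, exists p, Pl l p /\
    exists x, stl l p x /\ ~ ltK x.1 c.
  case: (pselect (exists l, ltK l.1 b /\ forall c, exists p, Pl l p /\
    exists x, stl l p x /\ ~ ltK x.1 c)) => // nl; exfalso.
  have Hc : forall l, ltK l.1 b -> exists c, forall p, P p -> st p l ->
      forall x, st p x -> x <> l -> ltK x.1 c.
    move=> l lb.
    case: (pselect (exists c, forall p, P p -> st p l ->
      forall x, st p x -> x <> l -> ltK x.1 c)) => // nc; exfalso.
    apply: nl; exists l; split => // c.
    case: (pselect (exists p, Pl l p /\ exists x, stl l p x /\ ~ ltK x.1 c)) => // np.
    exfalso; apply: nc; exists c => p Pp stp x stx xl.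
    case: (pselect (ltK x.1 c)) => // nxc; exfalso.
    by apply: np; exists p; split => //; exists x; split => //; split.
  pose cb l := ch k (fun c => forall p, P p -> st p l ->
      forall x, st p x -> x <> l -> ltK x.1 c).
  have cbP : forall l, ltK l.1 b -> forall p, P p -> st p l ->
      forall x, st p x -> x <> l -> ltK x.1 (cb l).
    by move=> l' lb'; apply: (@chP _ k (fun c => forall p, P p -> st p l' ->
      forall x, st p x -> x <> l' -> ltK x.1 c)); apply: Hc.
  have Wsmall : forall t : bool, exists d, forall beta, ltK beta b -> ltK (cb (beta, t)) d.
    move=> t.
    have hW : ~ ([set: K] #<= (fun beta => cb (beta, t)) @` seg ltK b).
      move=> h; have := (cK b).2; apply; apply: card_le_trans h _.
      exact: card_image_le.
    have [d hd] := small_bnd hstd hW.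
    by exists d => beta hb; apply: hd; exists beta.
  have [d1 hd1] := Wsmall true; have [d2 hd2] := Wsmall false.
  have [e [e1 e2]] := wo_max woK d1 d2.
  have [d [de db]] := wo_max woK e b.
  have [p [Pp [l' [stl' nl'd]]]] := hunb d.
  have [l0 [stl0 l0b]] := Hb p Pp (ex_intro _ l' stl').
  have l'l0 : l' <> l0.
    move=> e0; subst l'; apply: nl'd; exact: (wo_lt_nlt woK l0b db).
  have h1 := cbP l0 l0b p Pp stl0 l' stl' l'l0.
  have h2 : ltK (cb l0) e.
    case: l0 {stl0 l'l0 h1} l0b => beta [] /= hb.
      exact: (wo_lt_nlt woK (hd1 beta hb) e1).
    exact: (wo_lt_nlt woK (hd2 beta hb) e2).
  apply: nl'd; apply: (wo_lt_nlt woK _ de); exact: (wo_trans woK h1 h2).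
have hsz' : forall p, Pl l p -> szb n (stl l p).
  move=> p [Pp stp]; have [s [sn hs]] := hsz p Pp.
  have [s' [ss' hs']] := rem_list (hs l stp).
  exists s'; split; first by rewrite -ltnS; apply: leq_trans ss' sn.
  by move=> x [stx /= xl]; apply: hs' => //; apply: hs.
have [R' HR'] := IH _ (Pl l) (stl l) hsz' unb'.
exists (R' `|` [set l]) => c.
have [d [dc db]] := wo_max woK c b.
have [p [[Pp stpl] [m [md [iff' [x [[stx xl] nxm]]]]]]] := HR' d.
exists p; split => //; exists m; split; first exact: (wo_nlt_trans woK md dc).
split; last by exists x.
move=> y; split.
  move=> [sty ym]; case: (pselect (y = l)) => [->|yl]; first by right.
  by left; apply/iff'; split => //; split.
move=> [/iff' [[sty _] ym] //|->]; split => //.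
exact: (wo_lt_nlt woK (wo_lt_nlt woK lb db) md).
Qed.

Lemma KL T (ltT : T -> T -> Prop) K (ltK : K -> K -> Prop) (th : K -> T)
  (hstd : standing_assumptions ltT ltK th) (k : K)
  (I : Type) (P : set I) (st : I -> set (K * bool)) :
  (forall p, P p -> finite_set (st p)) ->
  (forall c, exists p, P p /\ exists l, st p l /\ ~ ltK l.1 c) ->
  exists R : set (K * bool), forall c, exists p, P p /\ exists m, ~ ltK m c /\
    (forall l, (st p l /\ ltK l.1 m) <-> R l) /\ exists l, st p l /\ ~ ltK l.1 m.
Proof.
move=> hfin hunb.
have hstd' := hstd.
case: hstd' => woT [cT [woK [cK [cof [KT [Kunc [thc [thi [thconv th0]]]]]]]]].
have [n unb] : exists n, forall c, exists p, (P p /\ szb n (st p)) /\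
    exists l, st p l /\ ~ ltK l.1 c.
  case: (pselect (exists n, forall c, exists p, (P p /\ szb n (st p)) /\
    exists l, st p l /\ ~ ltK l.1 c)) => // nn; exfalso.
  have Hc : forall n, exists c, forall p, P p -> szb n (st p) ->
      forall l, st p l -> ltK l.1 c.
    move=> n; case: (pselect (exists c, forall p, P p -> szb n (st p) ->
      forall l, st p l -> ltK l.1 c)) => // nc; exfalso.
    apply: nn; exists n => c.
    case: (pselect (exists p, (P p /\ szb n (st p)) /\
      exists l, st p l /\ ~ ltK l.1 c)) => // np; exfalso.
    apply: nc; exists c => p Pp sz l stl.
    case: (pselect (ltK l.1 c)) => // nlc; exfalso.
    by apply: np; exists p; split => //; exists l.
  pose cn n := ch k (fun c => forall p, P p -> szb n (st p) ->
      forall l, st p l -> ltK l.1 c).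
  have cnP : forall n p, P p -> szb n (st p) -> forall l, st p l -> ltK l.1 (cn n).
    by move=> n; apply: (@chP _ k (fun c => forall p, P p -> szb n (st p) ->
      forall l, st p l -> ltK l.1 c)); apply: Hc.
  have hW : ~ ([set: K] #<= range cn).
    move=> h; apply: Kunc; apply: card_le_trans h _; exact: card_image_le.
  have [d hd] := small_bnd hstd hW.
  have [p [Pp [l [stl nld]]]] := hunb d.
  have [s hs] := fin_list (hfin p Pp).
  have sz : szb (size s) (st p) by exists s; split => // x /hs.
  apply: nld; apply: (wo_trans woK (cnP _ _ Pp sz _ stl)); apply: hd; by exists (size s).
have hsz : forall p, [set p | P p /\ szb n (st p)] p -> szb n (st p) by move=> p [].
have [R HR] := KLn hstd k hsz unb.
exists R => c; have [p [[Pp _] h]] := HR c; by exists p.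
Qed.

Lemma ch_default U (u0 : U) (P : U -> Prop) : ~ (exists x, P x) -> ch u0 P = u0.
Proof. by move=> h; rewrite /ch; case: pselect. Qed.

Lemma capf_sub T (a : T -> set nat) (z z' : set T) : z' `<=` z -> capf a z `<=` capf a z'.
Proof. by move=> h w hw xi zxi; apply: hw; apply: h. Qed.

Lemma Qunion T K (a b : T -> set nat) (x : T -> set T) (S : K -> set T)
  (F1 F2 : set K) (Rs : K -> Prop) (zi zj : set T) (w : nat) (p1 p2 : K -> T) :
  Qposet a b x S F1 -> Qposet a b x S F2 ->
  capf a zi w -> capf b zj w ->
  (forall al, F1 al -> ~ Rs al -> S al (p1 al) /\ x (p1 al) `<=` zi) ->
  (forall al, F2 al -> ~ Rs al -> S al (p2 al) /\ x (p2 al) `<=` zj) ->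
  (forall al, Rs al -> F1 al /\ F2 al) ->
  Qposet a b x S (F1 `|` F2).
Proof.
move=> [f1 Q1] [f2 Q2] wa wb h1 h2 hR.
have claim : forall al be, F1 al -> F2 be -> al <> be ->
    exists i j, [/\ S al i, S be j &
      (capf a (x i) `&` capf b (x j) !=set0 \/
       capf b (x i) `&` capf a (x j) !=set0)].
  move=> al be F1al F2be albe.
  case: (pselect (Rs al)) => Ral; first exact: Q2 (hR _ Ral).2 F2be albe.
  case: (pselect (Rs be)) => Rbe; first exact: Q1 F1al (hR _ Rbe).1 albe.
  have [S1 x1] := h1 al F1al Ral; have [S2 x2] := h2 be F2be Rbe.
  exists (p1 al), (p2 be); split => //; left; exists w; split.
    exact: capf_sub x1 _ wa.
  exact: capf_sub x2 _ wb.
split; first by rewrite finite_setU.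
move=> al be [F1al|F2al] [F1be|F2be] albe.
- exact: Q1.
- exact: claim.
- have [i [j [Si Sj hij]]] := claim be al F1be F2al (nesym albe).
  by exists j, i; split => //; case: hij => h; [right|left]; rewrite setIC.
- exact: Q2.
Qed.

Lemma K_inf T (ltT : T -> T -> Prop) K (ltK : K -> K -> Prop) (th : K -> T)
  (hstd : standing_assumptions ltT ltK th) (k : K) : injle [set: nat] [set: K].
Proof.
case: hstd => woT [cT [woK [cK [cof [KT [Kunc [thc [thi [thconv th0]]]]]]]]].
apply: card_injle k _; apply/infiniteP => /finite_set_countable; exact: Kunc.
Qed.

Lemma seg_inf T (ltT : T -> T -> Prop) K (ltK : K -> K -> Prop) (th : K -> T)
  (hstd : standing_assumptions ltT ltK th) (al : K) : injle [set: nat] (seg ltT (th al)).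
Proof.
have hK := K_inf hstd al.
case: hstd => woT [cT [woK [cK [cof [KT [Kunc [thc [thi [thconv th0]]]]]]]]].
have [k0 hk0] := wo_min woK al.
have h1 := card_injle (th al) (th0 k0 hk0).1.
apply: injle_trans (injle_trans hK h1) _; apply: injle_sub => s /= sk0.
case: (wo_tri woK al k0) => [alk0|[e|k0al]].
- by case: (hk0 al).
- by rewrite e.
- exact: (wo_trans woT sk0 (thi _ _ k0al)).
Qed.

Lemma seg_small T (ltT : T -> T -> Prop) K (ltK : K -> K -> Prop) (th : K -> T)
  (hstd : standing_assumptions ltT ltK th) (al : K) (t : T) :
  ltT t (th al) -> injle (seg ltT t `*` [set: nat]) (seg ltT (th al)).
Proof.
move=> tal.
have hinf := seg_inf hstd al.
have [io [ioX ioi]] := hinf.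
have [mf [mfX mfi]] := hess t hinf.
have woT : well_order ltT by case: hstd.
exists (fun q => mf (q.1, io q.2)); split.
  move=> [s n] [/= st _]; apply: (mfX (s, io n)); split => //=.
    exact: (wo_trans woT st tal).
  exact: ioX.
move=> [s n] [s' n'] [/= st _] [/= st' _] e.
have := mfi (s, io n) (s', io n').
have hs : ltT s (th al) := wo_trans woT st tal.
have hs' : ltT s' (th al) := wo_trans woT st' tal.
move=> /(_ (conj hs (ioX n I)) (conj hs' (ioX n' I)) e) [-> /ioi].
by move=> /(_ I I) ->.
Qed.

Lemma forward T (ltT : T -> T -> Prop) K (ltK : K -> K -> Prop) (th : K -> T)
  (hstd : standing_assumptions ltT ltK th) (a b : T -> set nat) :
  nice a b ->
  (forall (x y : T -> set T) (S U : K -> set T),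
      disj_fin_family x -> disj_fin_family y ->
      X_sequence ltT th a b x S -> X_sequence ltT th a b y U ->
      prod_kappa_cc (Qposet a b x S) (Qposet a b y U)).
Proof.
move=> hnice x y S U dx dy XS YU Ac [Acm Aci].
have hstd' := hstd.
case: hstd' => woT [cT [woK [cK [cof [KT [Kunc [thc [thi [thconv th0]]]]]]]]].
have [k _] : exists k : K, True.
  case: (pselect (exists k : K, True)) => // nk; exfalso; apply: Kunc.
  have -> : [set: K] = set0 by apply/seteqP; split => // k _; apply: nk; exists k.
  exact: countable0.
case: (pselect (card_lt Ac [set: K])) => // nlt; exfalso.
have KAc : injle [set: K] Ac.
  case: (injle_total k (set0, set0) [set: K] Ac) => // /injle_card AcK.
  apply: (card_injle (set0, set0)); apply: contra_notP nlt => nKA; by split.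
pose st (p : set K * set K) := [set l : K * bool | if l.2 then p.1 l.1 else p.2 l.1].
have stfin : forall p, Ac p -> finite_set (st p).
  move=> p /Acm [[f1 _] [f2 _]].
  apply: (@sub_finite_set _ _ ((fun al => (al, true)) @` p.1 `|` (fun al => (al, false)) @` p.2)).
    by move=> [al []] /= h; [left|right]; exists al.
  rewrite finite_setU; split; exact: finite_image.
have unb : forall c, exists p, Ac p /\ exists l, st p l /\ ~ ltK l.1 c.
  move=> c; case: (pselect (exists p, Ac p /\ exists l, st p l /\ ~ ltK l.1 c)) => // np; exfalso.
  have hb : forall p, Ac p -> forall l, st p l -> ltK l.1 c.
    move=> p Acp l stl; case: (pselect (ltK l.1 c)) => // nl.
    by exfalso; apply: np; exists p; split => //; exists l.
  have [io [_ ioi]] := K_inf hstd k.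
  have hW : ~ ([set: K] #<= range io).
    move=> h; apply: Kunc; apply: card_le_trans h _; exact: card_image_le.
  have [c2 hc2] := small_bnd hstd hW.
  have [c' [c'c c'c2]] := wo_max woK c c2.
  pose X := seg ltK c'.
  have ioX : injle [set: nat] X.
    exists io; split; last by move=> m n _ _; apply: ioi.
    move=> n _; apply: (wo_lt_nlt woK _ c'c2); apply: hc2; by exists n.
  have AcX : injle Ac [set q : set K * set K | [/\ finite_set q.1, finite_set q.2, q.1 `<=` X & q.2 `<=` X]].
    exists id; split => // p Acp; have [[f1 _] [f2 _]] := Acm p Acp; split => // al h.
      exact: (wo_lt_nlt woK (hb p Acp (al, true) h) c'c).
    exact: (wo_lt_nlt woK (hb p Acp (al, false) h) c'c).
  have := injle_card (injle_trans KAc (injle_trans AcX (fs_enc k ioX))).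
  exact: (cK c').2.
have [R HR] := KL hstd k stfin unb.
pose comp (p' : K * bool -> T) (l : K * bool) := if l.2 then x (p' l) else y (p' l).
pose Good t (Us : set T) (z : set T) := exists p m (pi : K * bool -> T),
   [/\ Ac p, ltT t (th m),
   (forall l, (st p l /\ ltK l.1 m) <-> R l),
   (exists l, st p l /\ ~ ltK l.1 m) & ((forall l, st p l -> ~ R l ->
      (if l.2 then S l.1 (pi l) else U l.1 (pi l)) /\ comp pi l `&` Us = set0) /\
   z = \bigcup_(l in [set l | st p l /\ ~ R l]) comp pi l)].
have Goodfin : forall t Us z, Good t Us z -> finite_set z.
  move=> t Us z [p [m [pi [Acp _ _ _ [_ ->]]]]].
  apply: bigcup_finite.
    by apply: sub_finite_set (stfin p Acp); move=> l [].
  move=> l _; rewrite /comp; case: l.2; [exact: dx.1 | exact: dy.1].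
have Goodex : forall t Us, injle Us (seg ltT t `*` [set: nat]) -> exists z, Good t Us z.
  move=> t Us hUs.
  have [c tc] := thconv t.
  have [p [Acp [m [mc [iff [l0 [stl0 nl0]]]]]]] := HR c.
  have tm : ltT t (th m).
    case: (wo_tri woK m c) => [mc'|[e|cm]].
    - by case: mc.
    - by rewrite e.
    - exact: (wo_trans woT tc (thi _ _ cm)).
  have hpick : forall l, st p l -> ~ R l -> exists i,
      (if l.2 then S l.1 i else U l.1 i) /\ (if l.2 then x i else y i) `&` Us = set0.
    move=> l stl nR.
    have nlm : ~ ltK l.1 m by move=> h; apply: nR; apply/iff.
    have tl : ltT t (th l.1).
      case: (wo_tri woK l.1 m) => [lm|[e|ml]].
      - by case: nlm.
      - by rewrite e.
      - exact: (wo_trans woT tm (thi _ _ ml)).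
    have hU := injle_trans hUs (seg_small hstd tl).
    case: l.2.
    - have [XS1 XS2 XS3] := XS.
      apply: (pick_avoid t t dx.2 hU); exact: (XS2 l.1).2.
    - have [YU1 YU2 YU3] := YU.
      apply: (pick_avoid t t dy.2 hU); exact: (YU2 l.1).2.
  pose pi l := ch t (fun i => st p l -> ~ R l -> (if l.2 then S l.1 i else U l.1 i) /\
      (if l.2 then x i else y i) `&` Us = set0).
  have piP : forall l, st p l -> ~ R l ->
      (if l.2 then S l.1 (pi l) else U l.1 (pi l)) /\ comp pi l `&` Us = set0.
    move=> l stl nR.
    have ex : exists i, st p l -> ~ R l -> (if l.2 then S l.1 i else U l.1 i) /\
      (if l.2 then x i else y i) `&` Us = set0.
      by have [i hi] := hpick l stl nR; exists i.
    exact: (@chP _ t _ ex stl nR).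
  exists (\bigcup_(l in [set l | st p l /\ ~ R l]) comp pi l).
  exists p, m, pi; split => //; by exists l0.
have wfT : well_founded ltT by case: woT.
pose step (t : T) (prev : forall s, ltT s t -> set T) : set T :=
  ch set0 (Good t [set u | exists s (h : ltT s t), prev s h u]).
pose Z := Fix wfT (fun _ => set T) step.
have ZE : forall t, Z t = step t (fun s _ => Z s).
  move=> t; rewrite /Z; apply: (@Fix_eq T ltT wfT (fun _ => set T) step) => t' f g hfg.
  rewrite /step.
  have -> : [set u | exists s (h : ltT s t'), f s h u] = [set u | exists s (h : ltT s t'), g s h u].
    apply/seteqP; split => u [s [h hu]]; exists s, h; [by rewrite -hfg | by rewrite hfg].
  by [].
pose Us t := [set u | exists s (h : ltT s t), Z s u].
have ZE' : forall t, Z t = ch set0 (Good t (Us t)) by move=> t; rewrite ZE.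
have Zfin : forall t, finite_set (Z t).
  move=> t; rewrite ZE'.
  case: (pselect (exists z, Good t (Us t) z)) => [ex|nex].
    exact: Goodfin (@chP _ set0 _ ex).
  by rewrite ch_default //; exact: finite_set0.
have ZG : forall t, Good t (Us t) (Z t).
  move=> t; have ex : exists z, Good t (Us t) z.
    apply: Goodex; apply: injle_trans (union_fin t (D := seg ltT t) (Z := Z) (fun s _ => Zfin s)).
    by apply: injle_sub => u [s [h hu]]; exists s.
  rewrite ZE'; exact: (@chP _ set0 _ ex).
have key : forall i j, ltT i j -> Z i `&` Z j = set0.
  move=> i j ij; have [p [m [pi [_ _ _ _ [hpi ez]]]]] := ZG j.
  apply/seteqP; split => // u [Ziu]; rewrite ez => [[l [stl nR] cu]].
  have [_ e] := hpi l stl nR.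
  have : (comp pi l `&` Us j) u by split => //; exists i, ij.
  by rewrite e.
have Zdisj : forall i j, i <> j -> Z i `&` Z j = set0.
  move=> i j ij; case: (wo_tri woT i j) => [h|[e|h]].
  - exact: key.
  - by [].
  - by rewrite setIC; exact: key.
have dZ : disj_fin_family Z by split.
have [i [j [w [wa wb]]]] := hnice Z dZ.
have [p1 [m1 [pi1 [Ac1 _ iff1 [l1 [stl1 nl1]] [h1 ez1]]]]] := ZG i.
have [p2 [m2 [pi2 [Ac2 _ iff2 _ [h2 ez2]]]]] := ZG j.
have sub1 : forall l, st p1 l -> ~ R l -> comp pi1 l `<=` Z i.
  by move=> l stl nR; rewrite ez1 => u cu; exists l.
have sub2 : forall l, st p2 l -> ~ R l -> comp pi2 l `<=` Z j.
  by move=> l stl nR; rewrite ez2 => u cu; exists l.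
case: (pselect (p1 = p2)) => [e12|n12].
  subst p2.
  have nR : ~ R l1 by move=> /iff1 [_ h]; exact: nl1 h.
  have [hS1 _] := h1 l1 stl1 nR; have [hS2 _] := h2 l1 stl1 nR.
  have wa' := capf_sub (sub1 _ stl1 nR) wa; have wb' := capf_sub (sub2 _ stl1 nR) wb.
  move: hS1 hS2 wa' wb'; rewrite /comp; case: l1.2 => S1 S2 wa' wb'.
  - have [_ _ X3] := XS; have E := X3 _ _ _ S1 S2.
    have : (capf a (x (pi1 l1)) `&` capf b (x (pi2 l1))) w by split.
    by rewrite E.
  - have [_ _ X3] := YU; have E := X3 _ _ _ S1 S2.
    have : (capf a (y (pi1 l1)) `&` capf b (y (pi2 l1))) w by split.
    by rewrite E.
apply: (Aci p1 p2 Ac1 Ac2 n12).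
exists ((p1.1 `|` p2.1), (p1.2 `|` p2.2)); split; last first.
  split; split => u h /=; by [left | right].
split.
- apply: (@Qunion _ _ a b x S p1.1 p2.1 (fun al => R (al, true)) (Z i) (Z j) w
     (fun al => pi1 (al, true)) (fun al => pi2 (al, true))) => //.
  + exact: (Acm _ Ac1).1.
  + exact: (Acm _ Ac2).1.
  + move=> al F1 nR; have [hS _] := h1 (al, true) F1 nR; split => //.
    exact: (sub1 (al, true) F1 nR).
  + move=> al F2 nR; have [hS _] := h2 (al, true) F2 nR; split => //.
    exact: (sub2 (al, true) F2 nR).
  + move=> al Ral; split; [exact: ((iff1 _).2 Ral).1 | exact: ((iff2 _).2 Ral).1].
- apply: (@Qunion _ _ a b y U p1.2 p2.2 (fun al => R (al, false)) (Z i) (Z j) w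
     (fun al => pi1 (al, false)) (fun al => pi2 (al, false))) => //.
  + exact: (Acm _ Ac1).2.
  + exact: (Acm _ Ac2).2.
  + move=> al F1 nR; have [hS _] := h1 (al, false) F1 nR; split => //.
    exact: (sub1 (al, false) F1 nR).
  + move=> al F2 nR; have [hS _] := h2 (al, false) F2 nR; split => //.
    exact: (sub2 (al, false) F2 nR).
  + move=> al Ral; split; [exact: ((iff1 _).2 Ral).1 | exact: ((iff2 _).2 Ral).1].
Qed.

Lemma backward T (ltT : T -> T -> Prop) K (ltK : K -> K -> Prop) (th : K -> T)
  (hstd : standing_assumptions ltT ltK th) (a b : T -> set nat) :
  (forall (x y : T -> set T) (S U : K -> set T),
      disj_fin_family x -> disj_fin_family y ->
      X_sequence ltT th a b x S -> X_sequence ltT th a b y U ->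
      prod_kappa_cc (Qposet a b x S) (Qposet a b y U)) -> nice a b.
Proof.
move=> H.
have hstd' := hstd.
case: hstd' => woT [cT [woK [cK [cof [KT [Kunc [thc [thi [thconv th0]]]]]]]]].
have [k _] : exists k : K, True.
  case: (pselect (exists k : K, True)) => // nk; exfalso; apply: Kunc.
  have -> : [set: K] = set0 by apply/seteqP; split => // k _; apply: nk; exists k.
  exact: countable0.
case: (pselect (nice a b)) => // nn; exfalso.
have [x [dx E]] : exists x, disj_fin_family x /\
    forall i j, capf a (x i) `&` capf b (x j) = set0.
  case: (pselect (exists x, disj_fin_family x /\
    forall i j, capf a (x i) `&` capf b (x j) = set0)) => // nx; exfalso.
  apply: nn => x dx.
  case: (pselect (exists i j, capf a (x i) `&` capf b (x j) !=set0)) => // nij; exfalso.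
  apply: nx; exists x; split => // i j.
  apply/seteqP; split => // w hw; apply: nij; exists i, j, w.
  exact: hw.
have [psi [_ psii]] := card_injle (th k) KT.1.
have hT : injle [set: nat] [set: T].
  apply: injle_trans (K_inf hstd k) _; exists psi; split => //.
have [mf [_ mfi]] := hess (th k) hT.
have mfi' : forall u v u' v', mf (u, v) = mf (u', v') -> u = u' /\ v = v'.
  by move=> u v u' v' e; have [-> ->] := mfi (u, v) (u', v') (conj I I) (conj I I) e.
pose S al := [set mf (psi al, t) | t in [set: T]].
have injS : forall al, injle [set: T] (S al).
  move=> al; exists (fun t => mf (psi al, t)); split; first by move=> t _; exists t.
  by move=> t t' _ _ /mfi' [].
have XS : X_sequence ltT th a b x S.
  split.
  - move=> al be albe; apply/seteqP; split => // u [[t _ <-] [t' _ e]].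
    have [e1 _] := mfi' _ _ _ _ e; apply: albe; symmetry; exact: psii _ _ I I e1.
  - move=> al; split.
      by apply: injle_card; apply: injle_trans (injS al); apply: injle_sub.
    move=> h; apply: (cT (th al)).2; apply: card_le_trans h.
    exact: injle_card (injS al).
  - by move=> al i j _ _; apply: E.
have hcc := H x x S S dx dx XS XS.
pose Ac := [set p : set K * set K | exists al, p = ([set al], set0)].
have QS : forall al, Qposet a b x S [set al].
  move=> al; split; first exact: finite_set1.
  by move=> al' be -> -> h; case: h.
have Q0 : Qposet a b x S set0.
  by split; [exact: finite_set0 | move=> al be []].
have hA : prod_antichain (Qposet a b x S) (Qposet a b x S) Ac.
  split.
    move=> p [al ->]; split; [exact: QS | exact: Q0].
  move=> p q [al ->] [be ->] pq [r [[Qr _] [[le1 _] [le2 _]]]].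
  have albe : al <> be by move=> e; apply: pq; rewrite e.
  have [i [j [Si Sj hij]]] := Qr.2 al be (le1 al erefl) (le2 be erefl) albe.
  case: hij => [[w hw]|[w hw]].
    by move: hw; rewrite (E i j).
  by move: hw; rewrite setIC (E j i).
have [_ nKA] := hcc Ac hA.
apply: nKA; apply: injle_card; exists (fun al => ([set al], set0)); split; first by move=> al _; exists al.
move=> al be _ _ [e]; have : [set be] al by rewrite -e.
by [].
Qed.

Theorem lemma1 (T : Type) (ltT : T -> T -> Prop) (K : Type)
    (ltK : K -> K -> Prop) (th : K -> T)
    (hstd : standing_assumptions ltT ltK th)
    (a b : T -> set nat) (hpair : theta_pair a b) :
  nice a b <->
  (forall (x y : T -> set T) (S U : K -> set T),
      disj_fin_family x -> disj_fin_family y ->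
      X_sequence ltT th a b x S -> X_sequence ltT th a b y U ->
      prod_kappa_cc (Qposet a b x S) (Qposet a b y U)).
Proof.
split; [exact: (forward hstd) | exact: (backward hstd)].
Qed.
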